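(* Let $g\in\mathbb{R}^n$ be a unit vector and $H$ a symmetric positive definite $n\times n$ matrix. Set $s=-Hg$, $g_+=\frac{s}{\|s\|}$, $y=g_+-g$, $V=I-\frac{sy^T}{s^Ty}$, $H_+=VHV^T+\frac{ss^T}{s^Ty}$. Then $$\det H_+\le\tfrac12\det H\quad\text{and}\quad \lambda_{\max}(H_+)\le\lambda_{\max}(H).$$
   Context: $\lambda_{\max}(H)$ denotes the largest eigenvalue of a symmetric matrix $H$; $\|\cdot\|$ is the Euclidean norm. *)

(* Defs.v *)
From HB Require Import structures.
From mathcomp Require Import all_boot all_order all_algebra.
From mathcomp Require Import boolp classical_sets reals.
Set Implicit Arguments. Unset Strict Implicit. Unset Printing Implicit Defensive.
Import Order.TTheory GRing.Theory Num.Theory.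
Local Open Scope ring_scope.

Definition dotv {R : ringType} {n : nat} (u v : 'cV[R]_n) : R := (u^T *m v) 0 0.
Definition vnorm {R : rcfType} {n : nat} (v : 'cV[R]_n) : R := Num.sqrt (dotv v v).

Definition symmetricmx {R : ringType} {n : nat} (A : 'M[R]_n) : Prop := A^T = A.
Definition posdefmx {R : numDomainType} {n : nat} (A : 'M[R]_n) : Prop :=
  symmetricmx A /\ forall x : 'cV[R]_n, x != 0 -> 0 < dotv x (A *m x).

(* largest (real) eigenvalue: supremum of the (finite) set of eigenvalues;
   for a symmetric matrix this is the maximum eigenvalue *)
Definition lambda_max {R : realType} {n : nat} (A : 'M[R]_n) : R :=
  sup [set a : R | eigenvalue A a].

(* Main.v *)
Require Import Defs.
From HB Require Import structures.
From mathcomp Require Import all_boot all_order all_algebra.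
From mathcomp Require Import boolp classical_sets reals.
From mathcomp Require Import ring lra polyrcf.
Import Order.TTheory GRing.Theory Num.Theory.
Local Open Scope ring_scope.

Lemma dotvE {R : realType} {n : nat} (u v : 'cV[R]_n) : dotv u v = \sum_i u i 0 * v i 0.
Proof. by rewrite /dotv mxE; apply: eq_bigr => i _; rewrite mxE. Qed.

Lemma dotvC {R : realType} {n : nat} (u v : 'cV[R]_n) : dotv u v = dotv v u.
Proof. by rewrite !dotvE; apply: eq_bigr => i _; rewrite mulrC. Qed.

Lemma dotvDl {R : realType} {n : nat} (u w v : 'cV[R]_n) : dotv (u + w) v = dotv u v + dotv w v.
Proof. by rewrite !dotvE -big_split; apply: eq_bigr => i _; rewrite mxE mulrDl. Qed.
Lemma dotvZl {R : realType} {n : nat} a (u v : 'cV[R]_n) : dotv (a *: u) v = a * dotv u v.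
Proof. by rewrite !dotvE mulr_sumr; apply: eq_bigr => i _; rewrite mxE mulrA. Qed.
Lemma dotvNl {R : realType} {n : nat} (u v : 'cV[R]_n) : dotv (- u) v = - dotv u v.
Proof. by rewrite -scaleN1r dotvZl mulN1r. Qed.
Lemma dotvBl {R : realType} {n : nat} (u w v : 'cV[R]_n) : dotv (u - w) v = dotv u v - dotv w v.
Proof. by rewrite dotvDl dotvNl. Qed.
Lemma dotvDr {R : realType} {n : nat} (u w v : 'cV[R]_n) : dotv v (u + w) = dotv v u + dotv v w.
Proof. by rewrite dotvC dotvDl !(dotvC v). Qed.
Lemma dotvZr {R : realType} {n : nat} a (u v : 'cV[R]_n) : dotv v (a *: u) = a * dotv v u.
Proof. by rewrite dotvC dotvZl dotvC. Qed.
Lemma dotvNr {R : realType} {n : nat} (u v : 'cV[R]_n) : dotv v (- u) = - dotv v u.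
Proof. by rewrite dotvC dotvNl dotvC. Qed.
Lemma dotvBr {R : realType} {n : nat} (u w v : 'cV[R]_n) : dotv v (u - w) = dotv v u - dotv v w.
Proof. by rewrite dotvDr dotvNr. Qed.
Lemma dotv0r {R : realType} {n : nat} (v : 'cV[R]_n) : dotv v 0 = 0.
Proof. by rewrite dotvE big1 // => i _; rewrite mxE mulr0. Qed.
Lemma dotv0l {R : realType} {n : nat} (v : 'cV[R]_n) : dotv 0 v = 0.
Proof. by rewrite dotvC dotv0r. Qed.

Lemma dotv_mul {R : realType} {n : nat} (A : 'M[R]_n) (u v : 'cV[R]_n) :
  dotv u (A *m v) = dotv (A^T *m u) v.
Proof. by rewrite /dotv trmx_mul trmxK mulmxA. Qed.

Lemma outer_mul {R : realType} {n : nat} (u v x : 'cV[R]_n) :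
  (u *m v^T) *m x = (dotv v x) *: u.
Proof. by rewrite -mulmxA [v^T *m x]mx11_scalar mul_mx_scalar. Qed.

Lemma dotv_ge0 {R : realType} {n : nat} (x : 'cV[R]_n) : 0 <= dotv x x.
Proof. by rewrite dotvE sumr_ge0 // => i _; rewrite -expr2 sqr_ge0. Qed.

Lemma dotv_eq0 {R : realType} {n : nat} (x : 'cV[R]_n) : dotv x x = 0 -> x = 0.
Proof.
rewrite dotvE => /psumr_eq0P H; apply/matrixP => i j.
rewrite (ord1 j) mxE; apply/eqP; rewrite -sqrf_eq0 expr2 H //.
by move=> k _; rewrite -expr2 sqr_ge0.
Qed.

Lemma dotv_gt0 {R : realType} {n : nat} (x : 'cV[R]_n) : x != 0 -> 0 < dotv x x.
Proof.
move=> nz; rewrite lt_def dotv_ge0 andbT; apply/eqP => /dotv_eq0 h.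
by rewrite h eqxx in nz.
Qed.

Lemma coord_le {R : realType} {n : nat} (x : 'cV[R]_n) i : x i 0 ^+ 2 <= dotv x x.
Proof.
rewrite dotvE (bigD1 i) //= -expr2 lerDl sumr_ge0 // => k _.
by rewrite -expr2 sqr_ge0.
Qed.

Lemma quad_bound {R : realType} {n : nat} (A : 'M[R]_n) (x : 'cV[R]_n) :
  dotv x (A *m x) <= (\sum_i \sum_j (`|A i j| : R)) * dotv x x.
Proof.
rewrite dotvE mulr_suml; apply: ler_sum => i _.
rewrite mxE mulr_sumr mulr_suml; apply: ler_sum => j _.
rewrite mulrA mulrAC.
have h1 := coord_le x i; have h2 := coord_le x j.
have h3 := sqr_ge0 (x i 0 - x j 0); have h4 := sqr_ge0 (x i 0 + x j 0).
rewrite !expr2 in h1 h2 h3 h4.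
have hu : x i 0 * x j 0 <= dotv x x by nra.
have hl : - dotv x x <= x i 0 * x j 0 by nra.
case: (lerP 0 (A i j)) => hA.
  rewrite ger0_norm //; nra.
rewrite ltr0_norm //; nra.
Qed.

Lemma dotv_sym {R : realType} {n : nat} (M : 'M[R]_n) (z w : 'cV[R]_n) :
  M^T = M -> dotv w (M *m z) = dotv z (M *m w).
Proof. by move=> hM; rewrite dotv_mul hM dotvC. Qed.

Lemma psd_cs {R : realType} {n : nat} (M : 'M[R]_n) :
  M^T = M -> (forall x, 0 <= dotv x (M *m x)) ->
  forall z w, dotv z (M *m w) ^+ 2 <= dotv z (M *m z) * dotv w (M *m w).
Proof.
move=> hM hp z w.
have key t : 0 <= dotv z (M *m z) + 2 * t * dotv z (M *m w)
                   + t ^+ 2 * dotv w (M *m w).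
  have := hp (z + t *: w).
  rewrite mulmxDr -scalemxAr dotvDl !dotvDr !dotvZl !dotvZr (dotv_sym M z w hM).
  congr (_ <= _); ring.
set A := dotv z (M *m z) in key *; set B := dotv z (M *m w) in key *;
set C := dotv w (M *m w) in key *.
have hC : 0 <= C by rewrite /C hp.
have hA : 0 <= A by rewrite /A hp.
case: (ltrP 0 C) => hC'.
  have := key (- B / C).
  have -> : A + 2 * (- B / C) * B + (- B / C) ^+ 2 * C = A - B ^+ 2 / C.
    by field; rewrite gt_eqF.
  rewrite subr_ge0 ler_pdivrMr //.
have C0 : C = 0 by apply/le_anti; rewrite hC hC'.
case: (eqVneq B 0) => hB.
  by rewrite hB C0 expr0n /= mulr0.
have := key (- (A + 1) / (2 * B)).
have -> : A + 2 * (- (A + 1) / (2 * B)) * B + (- (A + 1) / (2 * B)) ^+ 2 * C = -1.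
  rewrite C0 mulr0 addr0; field; by rewrite hB.
by rewrite ler0N1.
Qed.

Lemma dotv_mul1 {R : realType} {n : nat} (x : 'cV[R]_n) : dotv x (1%:M *m x) = dotv x x.
Proof. by rewrite mul1mx. Qed.

Lemma max_eig {R : realType} {n : nat} (H : 'M[R]_n) (x0 : 'cV[R]_n) :
  H^T = H -> x0 != 0 ->
  exists mu, eigenvalue H mu /\ forall x, dotv x (H *m x) <= mu * dotv x x.
Proof.
move=> hH hx0.
pose S : set R := fun r => exists2 x : 'cV[R]_n, x != 0 & r = dotv x (H *m x) / dotv x x.
pose K := (\sum_i \sum_j (`|H i j| : R)).
have hS : has_sup S.
  split; first by exists (dotv x0 (H *m x0) / dotv x0 x0); exists x0.
  exists K => r [x hx ->].
  by rewrite ler_pdivrMr ?dotv_gt0 // quad_bound.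
set mu := sup S.
have hub : forall x, dotv x (H *m x) <= mu * dotv x x.
  move=> x; case: (eqVneq x 0) => [->|hx]; first by rewrite mulmx0 !dotv0r mulr0.
  rewrite -ler_pdivrMr ?dotv_gt0 //; apply: (sup_upper_bound hS).
  by exists x.
exists mu; split => //.
pose M := mu%:M - H.
have hMt : M^T = M by rewrite /M linearB /= tr_scalar_mx hH.
have hMx : forall x, dotv x (M *m x) = mu * dotv x x - dotv x (H *m x).
  by move=> x; rewrite /M mulmxBl mul_scalar_mx dotvBr dotvZr.
have hMp : forall x, 0 <= dotv x (M *m x) by move=> x; rewrite hMx subr_ge0 hub.
have : \det M == 0.
  apply/negPn/negP => hdet.
  have hU : M \in unitmx by rewrite unitmxE unitfE.
  pose N := invmx M.
  pose K' := (\sum_i \sum_j (`|N i j| : R)).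
  have hlow : forall x, x != 0 -> dotv x x <= K' * dotv x (M *m x).
    move=> x hx.
    have := psd_cs M hMt hMp (N *m x) x.
    have e1 : dotv (N *m x) (M *m x) = dotv x x.
      by rewrite dotv_mul hMt mulmxA mulmxV // mul1mx.
    have e2 : dotv (N *m x) (M *m (N *m x)) = dotv x (N *m x).
      by rewrite mulmxA mulmxV // mul1mx dotvC.
    rewrite e1 e2 => h.
    have hq := quad_bound N x.
    have hd := dotv_gt0 _ hx.
    have hm := hMp x.
    rewrite -/K' in hq.
    nra.
  have hK' : 0 < K'.
    have := hlow _ hx0; have := dotv_gt0 _ hx0; have := hMp x0.
    move=> a b c; rewrite ltNge; apply/negP => hk; clear -a b c hk; nra.
  have : mu <= mu - K'^-1.
    apply: ge_sup; first by case: hS.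
    move=> r [x hx ->].
    have hd := dotv_gt0 _ hx.
    have := hlow x hx; rewrite hMx => h.
    rewrite ler_pdivrMr // mulrBl.
    have : dotv x x / K' <= mu * dotv x x - dotv x (H *m x).
      by rewrite ler_pdivrMr // mulrC.
    clear -hd h; lra.
  have : 0 < K'^-1 by rewrite invr_gt0.
  lra.
move=> /det0P [v hv hvM].
apply/eigenvalueP; exists v => //.
move: hvM; rewrite /M mulmxBr mul_mx_scalar => /eqP; rewrite subr_eq0 => /eqP <-.
by [].
Qed.

Lemma det_rank1 {R : realType} {n : nat} (u v : 'cV[R]_n) :
  \det (1%:M + u *m v^T) = 1 + dotv v u.
Proof.
pose P := block_mx (1%:M : 'M[R]_n) (- u) v^T (1%:M : 'M[R]_1).
have e1 : P = block_mx 1%:M 0 v^T 1%:M *m block_mx 1%:M (- u) 0 (1%:M + v^T *m u).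
  rewrite mulmx_block /P !mul1mx !mul0mx !addr0 mulmx1 mulmxN [1%:M + _]addrC addKr.
  by [].
have e2 : P = block_mx (1%:M + u *m v^T) (- u) 0 1%:M *m block_mx 1%:M 0 v^T 1%:M.
  rewrite mulmx_block /P !mul1mx !mul0mx !mulmx0 !add0r !mulmx1 mulNmx addrK.
  by [].
have := congr1 determinant e2; rewrite {1}e1 !det_mulmx !det_lblock !det_ublock.
rewrite !det1 !mul1r !mulr1 => <-.
by rewrite det_mx11 [X in _ = _ + X]mxE !mxE eqxx.
Qed.

Lemma det_pd {R : realType} {n : nat} (H : 'M[R]_n) :
  (forall x : 'cV[R]_n, x != 0 -> 0 < dotv x (H *m x)) -> 0 < \det H.
Proof.
move=> hpd.
pose p := char_poly H.
have nr : {in `]-oo, 0], forall y : R, ~~ root p y}.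
  move=> y; rewrite in_itv /= => hy; rewrite -eigenvalue_root_char.
  apply/negP => /eigenvalueP [v hv vnz].
  have tnz : v^T != 0 by rewrite -(inj_eq (@trmx_inj _ _ _)) trmxK linear0.
  have := hpd _ tnz.
  rewrite /dotv trmxK mulmxA hv -scalemxAl mxE.
  have : 0 <= (v *m v^T) 0 0 by rewrite mxE sumr_ge0 // => i _; rewrite !mxE -expr2 sqr_ge0.
  move=> h1 h2. nra.
have := @sgp_minftyP R 0 p nr 0; rewrite in_itv /= lexx => /(_ isT).
rewrite /sgp_minfty horner_coef0 char_poly_det size_char_poly /=.
rewrite (monicP (char_poly_monic H)) mulr1 sgrM => h.
have e0 : Num.sg ((-1) ^+ n : R) != 0 by rewrite sgr_eq0 signr_eq0.
have : Num.sg (\det H) = 1.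
  by apply: (mulfI e0); rewrite h mulr1.
by move/eqP; rewrite sgr_cp0.
Qed.


Lemma amgm_aux {R : realType} (m P Q c : R) :
  m ^+ 2 <= P * Q -> 0 <= P -> 0 <= Q -> 2 * m * c <= Q + c ^+ 2 * P.
Proof.
move=> h hP hQ.
have h1 : 0 <= (Q - c ^+ 2 * P) ^+ 2 by apply: sqr_ge0.
have h2 : 0 <= Q + c ^+ 2 * P by rewrite addr_ge0 // mulr_ge0 // sqr_ge0.
rewrite leNgt; apply/negP => h3.
have h4 : (Q + c ^+ 2 * P) ^+ 2 < (2 * m * c) ^+ 2.
  have h6 := le_lt_trans h2 h3; nra.
have h5 : (2 * m * c) ^+ 2 <= 4 * c ^+ 2 * (P * Q).
  have -> : (2 * m * c) ^+ 2 = 4 * c ^+ 2 * m ^+ 2 by ring.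
  have hc : 0 <= c ^+ 2 by apply: sqr_ge0. nra.
have e : (Q + c ^+ 2 * P) ^+ 2 = (Q - c ^+ 2 * P) ^+ 2 + 4 * c ^+ 2 * (P * Q) by ring.
lra.
Qed.

Lemma mx_ext {R : realType} {n : nat} (A B : 'M[R]_n) :
  (forall x : 'cV[R]_n, A *m x = B *m x) -> A = B.
Proof.
move=> h; apply/matrixP => i j.
by move: (h (delta_mx j 0)); rewrite -!colE => /matrixP /(_ i 0); rewrite !mxE.
Qed.

Lemma eig_le {R : realType} {n : nat} (A : 'M[R]_n) (mu b : R) :
  (forall x, dotv x (A *m x) <= mu * dotv x x) -> eigenvalue A b -> b <= mu.
Proof.
move=> h /eigenvalueP [v hv vnz].
have tnz : v^T != 0 by rewrite -(inj_eq (@trmx_inj _ _ _)) trmxK linear0.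
have := h v^T; rewrite dotv_mul -trmx_mul hv linearZ /= dotvZl.
have := dotv_gt0 _ tnz => hp; rewrite ler_pM2r //.
Qed.

Lemma dotv_expand {R : realType} {n : nat} (w y : 'cV[R]_n) (c : R) :
  dotv (w + c *: y) (w + c *: y) = dotv w w + 2 * c * dotv y w + c ^+ 2 * dotv y y.
Proof. rewrite !dotvDl !dotvDr !dotvZl !dotvZr (dotvC w y); ring. Qed.

Local Open Scope classical_set_scope.

Theorem mainTheorem7 (R : realType) (n : nat) (g : 'cV[R]_n) (H : 'M[R]_n) :
  vnorm g = 1 -> posdefmx H ->
  let s := - (H *m g) in
  let gp := (vnorm s)^-1 *: s in
  let y := gp - g in
  let V := 1%:M - (dotv s y)^-1 *: (s *m y^T) in
  let Hp := V *m H *m V^T + (dotv s y)^-1 *: (s *m s^T) in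
  \det Hp <= 2^-1 * \det H /\ lambda_max Hp <= lambda_max H.
Proof.
move=> hg [hsym hpd] s gp y V Hp.
have gg : dotv g g = 1.
  by have := sqr_sqrtr (dotv_ge0 g); rewrite -/(vnorm g) hg expr1n.
have gnz : g != 0 by apply/eqP => g0; move: gg; rewrite g0 dotv0r => /eqP; rewrite eq_sym oner_eq0.
have hpsd : forall x, 0 <= dotv x (H *m x).
  move=> x; case: (eqVneq x 0) => [->|hx]; first by rewrite mulmx0 dotv0r.
  by apply/ltW/hpd.
set a := dotv g (H *m g).
have ha : 0 < a by apply: hpd.
set ss := dotv s s.
have sg : dotv s g = - a by rewrite /s dotvNl dotvC.
have snz : s != 0.
  by apply/eqP => s0; move: sg; rewrite s0 dotv0l => /eqP; rewrite eq_sym oppr_eq0 gt_eqF.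
have hss : 0 < ss by apply: dotv_gt0.
set sig := vnorm s.
have sig2 : sig ^+ 2 = ss by apply: sqr_sqrtr; apply: dotv_ge0.
have hsig : 0 < sig by rewrite /sig /vnorm sqrtr_gt0.
set rho := dotv s y.
have erho : rho = sig + a.
  rewrite /rho /y /gp dotvBr dotvZr sg -/ss -sig2 opprK -/sig; field; by rewrite gt_eqF.
have hrho : 0 < rho by rewrite erho addr_gt0.
have [mu [emu hub]] := max_eig H g hsym gnz.
have amu : a <= mu by have := hub g; rewrite gg mulr1.
have ssmu : ss <= mu * a.
  have := psd_cs H hsym hpsd s g.
  have -> : dotv s (H *m g) = - ss by rewrite -[H *m g]opprK -/s dotvNr.
  have := hub s; rewrite -/ss => h1 h2.
  have : ss ^+ 2 <= mu * ss * a.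
    rewrite sqrrN in h2; apply: (le_trans h2); rewrite -/a ler_wpM2r //; exact: ltW.
  move=> h3; rewrite expr2 -mulrA [ss * a]mulrC mulrA in h3.
  by rewrite -(ler_pM2r hss).
have sigmu : sig <= mu by nra.
have Hg : H *m g = - s by rewrite /s opprK.
have Vz : forall z, V *m z = z - (rho^-1 * dotv y z) *: s.
  by move=> z; rewrite /V mulmxBl mul1mx -scalemxAl outer_mul scalerA.
have VTz : forall z, V^T *m z = z - (rho^-1 * dotv s z) *: y.
  move=> z; rewrite /V linearB /= tr_scalar_mx linearZ /= trmx_mul trmxK.
  by rewrite mulmxBl mul1mx -scalemxAl outer_mul scalerA.
have Hpx : forall x, Hp *m x = V *m (H *m (V^T *m x)) + (rho^-1 * dotv s x) *: s.
  by move=> x; rewrite /Hp mulmxDl -!mulmxA -scalemxAl outer_mul scalerA.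
have eyy : dotv y y = 2 + 2 * a / sig.
  rewrite /y /gp !dotvBl !dotvBr !dotvZl !dotvZr sg gg (dotvC g s) sg -/ss -/sig -sig2.
  by field; rewrite gt_eqF.
have Fy : rho + mu - a <= mu * dotv y y.
  rewrite eyy erho; have : 0 <= a / sig by rewrite divr_ge0 // ltW.
  move=> h; nra.
have hray : forall x, dotv x (Hp *m x) <= mu * dotv x x.
  move=> x.
  set c := rho^-1 * dotv s x.
  set w := V^T *m x.
  have ew : w = x - c *: y by rewrite /w VTz.
  have ex : x = w + c *: y by rewrite ew subrK.
  have sw : dotv s w = 0.
    by rewrite ew dotvBr dotvZr -/rho /c; field; rewrite gt_eqF.
  set t := dotv g w.
  have yw : dotv y w = - t.
    by rewrite /y /gp dotvBl dotvZl sw mulr0 sub0r.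
  have eq1 : dotv x (Hp *m x) = dotv w (H *m w) + rho * c ^+ 2.
    rewrite Hpx dotvDr dotvZr (dotv_mul V) -/w (dotvC x s) /c.
    by field; rewrite gt_eqF.
  have eq2 : dotv x x = dotv w w - 2 * c * t + c ^+ 2 * dotv y y.
    by rewrite {1 2}ex dotv_expand yw; ring.
  pose D := mu%:M - H.
  have hDt : D^T = D by rewrite /D linearB /= tr_scalar_mx hsym.
  have hDx : forall z, dotv z (D *m z) = mu * dotv z z - dotv z (H *m z).
    by move=> z; rewrite /D mulmxBl mul_scalar_mx dotvBr dotvZr.
  have hDp : forall z, 0 <= dotv z (D *m z) by move=> z; rewrite hDx subr_ge0 hub.
  have := psd_cs D hDt hDp g w.
  have -> : dotv g (D *m w) = mu * t.
    rewrite /D mulmxBl mul_scalar_mx dotvBr dotvZr -/t (dotv_sym H w g hsym) Hg.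
    by rewrite dotvNr dotvC sw oppr0 subr0.
  rewrite !hDx gg -/a mulr1 => hcs.
  have := amgm_aux _ _ _ c hcs; rewrite subr_ge0 amu subr_ge0 hub => /(_ isT isT) h.
  have hc2 : 0 <= c ^+ 2 by apply: sqr_ge0.
  have := ler_wpM2l hc2 Fy => h2.
  rewrite eq1 eq2.
  clear -h h2; nra.
have hHpe : lambda_max Hp <= mu.
  rewrite /lambda_max.
  case: (pselect (exists b, eigenvalue Hp b)) => [[b hb]|nE].
    apply: ge_sup; first by exists b.
    by move=> r /= hr; apply: (eig_le _ _ _ hray).
  have -> : [set a0 : R | eigenvalue Hp a0] = set0.
    by apply/seteqP; split => r //= hr; apply: nE; exists r.
  by rewrite sup0; apply: le_trans (ltW ha) amu.
have hHe : mu <= lambda_max H.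
  rewrite /lambda_max; apply: sup_upper_bound => //.
  split; first by exists mu.
  by exists mu => r /= hr; apply: (eig_le _ _ _ hub).
split; last by apply: le_trans hHpe hHe.
have aS : a <= sig.
  have h1 : (1%:M : 'M[R]_n)^T = 1%:M by apply: tr_scalar_mx.
  have h2 : forall x : 'cV[R]_n, 0 <= dotv x (1%:M *m x) by move=> x; rewrite mul1mx dotv_ge0.
  have := psd_cs _ h1 h2 g (H *m g).
  rewrite !mul1mx -/a gg mul1r Hg dotvNl dotvNr opprK -/ss -sig2 => h3.
  clear -h3 ha hsig; nra.
have dH := det_pd H hpd.
pose th := (Num.sqrt (a * rho))^-1.
have har : 0 < a * rho by rewrite mulr_gt0.
have th2 : th ^+ 2 = (a * rho)^-1 by rewrite /th exprVn sqr_sqrtr // ltW.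
have gHy : dotv g (H *m y) = - rho.
  by rewrite (dotv_sym H y g hsym) Hg dotvNr dotvC.
have gHx : forall x, dotv g (H *m x) = - dotv s x.
  by move=> x; rewrite (dotv_sym H x g hsym) Hg dotvNr dotvC.
have ys : dotv y s = rho by rewrite dotvC.
clearbody Hp V y gp s.
pose z := th *: g - rho^-1 *: y.
pose F := 1%:M + s *m z^T.
have hFx : forall x : 'cV[R]_n, Hp *m x = F *m (H *m (F^T *m x)).
  move=> x.
  have FTx : F^T *m x = x + dotv s x *: z.
    by rewrite /F linearD /= tr_scalar_mx trmx_mul trmxK mulmxDl mul1mx outer_mul.
  rewrite FTx Hpx VTz Vz /F mulmxDl mul1mx outer_mul /z.
  rewrite !mulmxBr !mulmxDr -!scalemxAr mulmxBr -!scalemxAr Hg.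
  rewrite !(dotvBl, dotvBr, dotvDl, dotvDr, dotvZl, dotvZr, dotvNl, dotvNr).
  rewrite ?gHx ?gHy ?sg ?ys (dotvC g s) sg -/rho.
  move: (H *m x) (H *m y) => hx hy.
  apply/matrixP => i j; rewrite !mxE.
  have hth : th ^+ 2 * (a * rho) = 1 by rewrite th2 mulVf // gt_eqF.
  move: hth; set T := th; set X := dotv s x; set Y1 := dotv y hx; set Y2 := dotv y hy.
  move=> hth.
  apply/eqP; rewrite -subr_eq0; apply/eqP.
  transitivity (- rho^-1 * X * s i j * (T ^+ 2 * (a * rho) - 1)); last by rewrite hth subrr mulr0.
  by field; rewrite gt_eqF.
have hF : Hp = F *m H *m F^T by apply: mx_ext => x; rewrite hFx !mulmxA.
have dF : \det F = - th * a.
  rewrite /F det_rank1 /z dotvBl !dotvZl (dotvC g s) sg ys.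
  by field; rewrite gt_eqF.
have dHp : \det Hp = a / rho * \det H.
  rewrite hF !det_mulmx det_tr dF.
  have -> : - th * a * \det H * (- th * a) = th ^+ 2 * a ^+ 2 * \det H by ring.
  by rewrite th2; field; rewrite ?gt_eqF.
rewrite dHp ler_pM2r // erho ler_pdivrMr ?addr_gt0 //.
lra.
Qed.
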